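(* For every $i\in\{1,\dots,n\}$, the collision-avoidance command $\mathbf p\mapsto v_i^{\mathrm{cv}}(\mathbf p)$ is locally Lipschitz on $\mathbb{R}^{dn}$.
   Context: $n\ge2$ robots with positions $p_i\in\mathbb{R}^d$, $\mathbf p=[p_1^\top,\dots,p_n^\top]^\top\in\mathbb{R}^{dn}$; sample points $q_1,\dots,q_m\in\mathbb{R}^d$; constants $\beta>0$, $\sigma_1>0$, $\sigma_2>0$, $\varepsilon\in(0,1)$, $r_{\mathrm{avoid}}>0$. Mass: $P_k(\mathbf p)=\frac1n\sum_{i=1}^n e^{-\beta\|q_k-p_i\|^2}$. Meanshift command: $v_i^{\mathrm{ms}}(\mathbf p)=\dfrac{\frac{\sigma_1}{m}\sum_{k=1}^m P_k(\mathbf p)^{-1}e^{-\beta\|q_k-p_i\|^2}(q_k-p_i)}{\sum_{k=1}^m P_k(\mathbf p)^{-1}e^{-\beta\|q_k-p_i\|^2}}$. Repulsive term: $\tilde v_i^{\mathrm{cv}}=\sigma_2\sum_{j\ne i,\ \|p_i-p_j\|\le r_{\mathrm{avoid}}}\frac{r_{\mathrm{avoid}}-\|p_i-p_j\|}{\|p_i-p_j\|+\varepsilon}(p_i-p_j)$. With $\varphi=\min\{\|v_i^{\mathrm{ms}}\|^2/\varepsilon,1\}$, the gain is $\kappa_2=\varphi$ if $(v_i^{\mathrm{ms}})^\top\tilde v_i^{\mathrm{cv}}\ge0$ and $\kappa_2=\varphi\min\{-(1-\varepsilon)\|v_i^{\mathrm{ms}}\|^2/((v_i^{\mathrm{ms}})^\top\tilde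 v_i^{\mathrm{cv}}),1\}$ if $(v_i^{\mathrm{ms}})^\top\tilde v_i^{\mathrm{cv}}<0$; collision-avoidance command $v_i^{\mathrm{cv}}=\kappa_2\tilde v_i^{\mathrm{cv}}$. *)

(* Defs.v *)
From HB Require Import structures.
From mathcomp Require Import all_boot all_order all_algebra.
From mathcomp Require Import reals.
From mathcomp Require Import sequences exp.
Set Implicit Arguments. Unset Strict Implicit. Unset Printing Implicit Defensive.
Import Order.TTheory GRing.Theory Num.Theory.
Local Open Scope ring_scope.

Section Defs.
Variable R : realType.

Definition vdot (d : nat) (u v : 'rV[R]_d) : R := \sum_(j < d) u 0 j * v 0 j.
Definition vnorm (d : nat) (u : 'rV[R]_d) : R := Num.sqrt (vdot u u).

(* A configuration p = [p_1^T,...,p_n^T]^T in R^{dn} is stored as the n x d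
   matrix whose i-th row is p_i; its Euclidean norm in R^{dn} is the
   Frobenius norm. *)
Definition pos (n d : nat) (p : 'M[R]_(n, d)) (i : 'I_n) : 'rV[R]_d := row i p.
Definition cnorm (n d : nat) (p : 'M[R]_(n, d)) : R :=
  Num.sqrt (\sum_(i < n) \sum_(j < d) p i j ^+ 2).

Definition mass (n d m : nat) (beta : R) (q : 'I_m -> 'rV[R]_d)
  (p : 'M[R]_(n, d)) (k : 'I_m) : R :=
  n%:R^-1 * \sum_(i < n) expR (- beta * vnorm (q k - pos p i) ^+ 2).

Definition v_ms (n d m : nat) (beta sigma1 : R) (q : 'I_m -> 'rV[R]_d)
  (p : 'M[R]_(n, d)) (i : 'I_n) : 'rV[R]_d :=
  (\sum_(k < m) ((mass beta q p k)^-1 * expR (- beta * vnorm (q k - pos p i) ^+ 2)))^-1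
  *: ((sigma1 / m%:R) *:
      \sum_(k < m) (((mass beta q p k)^-1 * expR (- beta * vnorm (q k - pos p i) ^+ 2))
                    *: (q k - pos p i))).

Definition v_rep (n d : nat) (sigma2 eps ravoid : R)
  (p : 'M[R]_(n, d)) (i : 'I_n) : 'rV[R]_d :=
  sigma2 *: \sum_(j < n | (j != i) && (vnorm (pos p i - pos p j) <= ravoid))
     (((ravoid - vnorm (pos p i - pos p j)) / (vnorm (pos p i - pos p j) + eps))
        *: (pos p i - pos p j)).

Definition kappa2 (d : nat) (eps : R) (v vt : 'rV[R]_d) : R :=
  let phi := Num.min (vnorm v ^+ 2 / eps) 1 in
  if 0 <= vdot v vt then phi
  else phi * Num.min (- (1 - eps) * vnorm v ^+ 2 / vdot v vt) 1.

Definition v_cv (n d m : nat) (beta sigma1 sigma2 eps ravoid : R)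
  (q : 'I_m -> 'rV[R]_d) (p : 'M[R]_(n, d)) (i : 'I_n) : 'rV[R]_d :=
  kappa2 eps (v_ms beta sigma1 q p i) (v_rep sigma2 eps ravoid p i)
  *: v_rep sigma2 eps ravoid p i.

Definition locally_lipschitz (n d : nat) (f : 'M[R]_(n, d) -> 'rV[R]_d) : Prop :=
  forall p0 : 'M[R]_(n, d), exists r : R, 0 < r /\ exists L : R,
    forall p p' : 'M[R]_(n, d), cnorm (p - p0) < r -> cnorm (p' - p0) < r ->
      vnorm (f p - f p') <= L * cnorm (p - p').

End Defs.

(* Main.v *)
Require Import Defs.
From HB Require Import structures.
From mathcomp Require Import all_boot all_order all_algebra.
From mathcomp Require Import reals.
From mathcomp Require Import sequences exp.
From mathcomp Require Import ring lra.
Import Order.TTheory GRing.Theory Num.Theory.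
Set Implicit Arguments. Unset Strict Implicit.
Local Open Scope ring_scope.

Section Basics.
Variable R : realType.

Lemma sumsq_le_sqsum {I : Type} (s : seq I) (x : I -> R) :
  \sum_(j <- s) x j ^+ 2 <= (\sum_(j <- s) `|x j|) ^+ 2.
Proof.
elim: s => [|a s IH]; first by rewrite !big_nil expr0n.
rewrite !big_cons.
have h0 : 0 <= \sum_(j <- s) `|x j| by apply: sumr_ge0 => j _.
have ha : 0 <= `|x a| by [].
have hs : x a ^+ 2 = `|x a| ^+ 2 by rewrite real_normK // num_real.
rewrite hs; nra.
Qed.

Lemma vnorm_le_sum (d : nat) (u : 'rV[R]_d) : vnorm u <= \sum_(j < d) `|u 0 j|.
Proof.
rewrite /vnorm /vdot.
have h0 : 0 <= \sum_(j < d) `|u 0 j| by apply: sumr_ge0 => j _.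
rewrite -(ger0_norm h0) -sqrtr_sqr ler_wsqrtr //.
have := sumsq_le_sqsum (index_enum 'I_d) (fun j => u 0 j).
by under [in X in X <= _]eq_bigr do rewrite expr2.
Qed.

Lemma vdot_ge0 (d : nat) (u : 'rV[R]_d) : 0 <= vdot u u.
Proof. by apply: sumr_ge0 => j _; rewrite -expr2 sqr_ge0. Qed.

Lemma vnorm_sq (d : nat) (u : 'rV[R]_d) : vnorm u ^+ 2 = vdot u u.
Proof. by rewrite /vnorm sqr_sqrtr // vdot_ge0. Qed.

Lemma vdotC (d : nat) (u w : 'rV[R]_d) : vdot u w = vdot w u.
Proof. by apply: eq_bigr => j _; rewrite mulrC. Qed.

Lemma cauchy_schwarz (d : nat) (u w : 'rV[R]_d) :
  vdot u w ^+ 2 <= vdot u u * vdot w w.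
Proof.
set A := vdot u u; set B := vdot w w; set C := vdot u w.
have hA : 0 <= A by apply: vdot_ge0.
have [A0|Apos] := eqVneq A 0.
  have u0 : forall j, u 0 j = 0.
    move=> j; have : \sum_(k < d) u 0 k * u 0 k = 0 by [].
    move/eqP; rewrite psumr_eq0; last by move=> k _; rewrite -expr2 sqr_ge0.
    by move/allP/(_ j (mem_index_enum _)); rewrite /= mulf_eq0 orbb => /eqP.
  have -> : C = 0 by rewrite /C /vdot big1 // => j _; rewrite u0 mul0r.
  by rewrite A0 expr0n /= mul0r.
have hApos : 0 < A by rewrite lt_def Apos hA.
have hsq : 0 <= \sum_(j < d) (A * w 0 j - C * u 0 j) ^+ 2.
  by apply: sumr_ge0 => j _; rewrite sqr_ge0.
have e : \sum_(j < d) (A * w 0 j - C * u 0 j) ^+ 2 = A * (A * B - C ^+ 2).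
  have -> : \sum_(j < d) (A * w 0 j - C * u 0 j) ^+ 2 =
     \sum_(j < d) (A ^+ 2 * (w 0 j * w 0 j) - (2 * A * C) * (u 0 j * w 0 j)
                   + C ^+ 2 * (u 0 j * u 0 j)).
    by apply: eq_bigr => j _; ring.
  rewrite big_split /= sumrB -!mulr_sumr.
  rewrite -/(vdot w w) -/(vdot u w) -/(vdot u u) -/A -/B -/C; ring.
rewrite e in hsq.
have : 0 <= A * B - C ^+ 2 by rewrite -(pmulr_rge0 _ hApos).
lra.
Qed.

Lemma vdot_add (d : nat) (u w : 'rV[R]_d) :
  vdot (u + w) (u + w) = vdot u u + 2 * vdot u w + vdot w w.
Proof.
rewrite /vdot mulr_sumr -!big_split /=; apply: eq_bigr => j _; rewrite !mxE; ring.
Qed.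

Lemma vnorm_triangle (d : nat) (u w : 'rV[R]_d) : vnorm (u + w) <= vnorm u + vnorm w.
Proof.
have h0 : 0 <= vnorm u + vnorm w by rewrite addr_ge0 // sqrtr_ge0.
rewrite -(ger0_norm h0) -sqrtr_sqr /vnorm ler_wsqrtr // vdot_add.
have hu := sqr_sqrtr (vdot_ge0 u); have hw := sqr_sqrtr (vdot_ge0 w).
have hC : vdot u w <= Num.sqrt (vdot u u) * Num.sqrt (vdot w w).
  rewrite -sqrtrM ?vdot_ge0 //.
  apply: le_trans (ler_norm _) _.
  by rewrite -sqrtr_sqr ler_wsqrtr // cauchy_schwarz.
rewrite sqrrD hu hw; lra.
Qed.

Lemma vnorm_lip (d : nat) (u w : 'rV[R]_d) : `|vnorm u - vnorm w| <= vnorm (u - w).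
Proof.
have h1 := vnorm_triangle (u - w) w; rewrite subrK in h1.
have h2 := vnorm_triangle (w - u) u; rewrite subrK in h2.
have e : vnorm (w - u) = vnorm (u - w).
  rewrite /vnorm; congr Num.sqrt; apply: eq_bigr => j _; rewrite !mxE; ring.
rewrite e in h2.
rewrite ler_norml; apply/andP; split; lra.
Qed.

End Basics.
Section LLsec.
Variables (R : realType) (n d : nat).
Local Notation M := 'M[R]_(n, d).

Definition LL (f : M -> R) := forall p0 : M, exists r : R, 0 < r /\ exists L : R,
  0 <= L /\ forall p p' : M, cnorm (p - p0) < r -> cnorm (p' - p0) < r ->
    `|f p - f p'| <= L * cnorm (p - p').

Lemma cnorm_ge0 (p : M) : 0 <= cnorm p.
Proof. exact: sqrtr_ge0. Qed.

Lemma cnorm_subrr (p : M) : cnorm (p - p) = 0.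
Proof.
rewrite /cnorm subrr big1 ?sqrtr0 // => i _; rewrite big1 // => j _.
by rewrite mxE expr0n.
Qed.

Lemma entry_le (p : M) a b : `|p a b| <= cnorm p.
Proof.
rewrite -sqrtr_sqr /cnorm ler_wsqrtr //.
rewrite (bigD1 a) //= (bigD1 b) //=.
have h1 : 0 <= \sum_(j < d | j != b) p a j ^+ 2 by apply: sumr_ge0 => j _; apply: sqr_ge0.
have h2 : 0 <= \sum_(i < n | i != a) \sum_(j < d) p i j ^+ 2.
  by apply: sumr_ge0 => i _; apply: sumr_ge0 => j _; apply: sqr_ge0.
lra.
Qed.

Lemma LL_ext (f g : M -> R) : (forall p, f p = g p) -> LL f -> LL g.
Proof.
move=> e h p0; have [r [r0 [L [L0 H]]]] := h p0.
exists r; split=> //; exists L; split=> // p p' hp hp'.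
by rewrite -!e; apply: H.
Qed.

Lemma LL_bnd (f : M -> R) : LL f -> forall p0 : M, exists r : R, 0 < r /\ exists L : R,
  0 <= L /\ (forall p p' : M, cnorm (p - p0) < r -> cnorm (p' - p0) < r ->
    `|f p - f p'| <= L * cnorm (p - p')) /\
  exists B, 0 <= B /\ forall p, cnorm (p - p0) < r -> `|f p| <= B.
Proof.
move=> h p0; have [r [r0 [L [L0 H]]]] := h p0.
exists r; split=> //; exists L; split=> //; split=> //.
exists (`|f p0| + L * r); split; first by rewrite addr_ge0 // mulr_ge0 // ltW.
move=> p hp.
have h0 : cnorm (p0 - p0) < r by rewrite cnorm_subrr.
have := H p p0 hp h0.
have := ler_normD (f p - f p0) (f p0); rewrite subrK.
have : L * cnorm (p - p0) <= L * r by rewrite ler_wpM2l // ltW.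
lra.
Qed.

Lemma LL_comp2 (h : R -> R -> R) (D : R -> Prop) (f g : M -> R) :
  (forall p, D (f p)) ->
  (forall B, 0 <= B -> exists K, 0 <= K /\ forall x y x' y', D x -> D x' ->
     `|x| <= B -> `|y| <= B -> `|x'| <= B -> `|y'| <= B ->
     `|h x y - h x' y'| <= K * (`|x - x'| + `|y - y'|)) ->
  LL f -> LL g -> LL (fun p => h (f p) (g p)).
Proof.
move=> hD hh hf hg p0.
have [r1 [r10 [L1 [L10 [H1 [B1 [B10 HB1]]]]]]] := LL_bnd hf p0.
have [r2 [r20 [L2 [L20 [H2 [B2 [B20 HB2]]]]]]] := LL_bnd hg p0.
have [K [K0 HK]] := hh (B1 + B2) (addr_ge0 B10 B20).
exists (Num.min r1 r2); split; first by rewrite lt_min r10 r20.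
exists (K * (L1 + L2)); split; first by rewrite mulr_ge0 // addr_ge0.
move=> p p'; rewrite !lt_min => /andP[hp1 hp2] /andP[hp1' hp2'].
have e1 := H1 _ _ hp1 hp1'; have e2 := H2 _ _ hp2 hp2'.
have b1 := HB1 _ hp1; have b2 := HB2 _ hp2.
have b1' := HB1 _ hp1'; have b2' := HB2 _ hp2'.
apply: le_trans (HK _ _ _ _ (hD p) (hD p') _ _ _ _) _; try lra.
rewrite mulrDr -!mulrA -mulrDr ler_wpM2l //; lra.
Qed.

Lemma LL_const (c : R) : LL (fun _ => c).
Proof.
move=> p0; exists 1; split=> //; exists 0; split=> // p p' _ _.
by rewrite subrr normr0 mul0r.
Qed.

Lemma LL_entry a b : LL (fun p : M => p a b).
Proof.
move=> p0; exists 1; split=> //; exists 1; split=> // p p' _ _.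
by rewrite mul1r; apply: le_trans (entry_le (p - p') a b); rewrite !mxE.
Qed.

Lemma LL_add (f g : M -> R) : LL f -> LL g -> LL (fun p => f p + g p).
Proof.
apply: (@LL_comp2 (fun x y => x + y) (fun _ => True)) => // B B0.
exists 1; split=> // x y x' y' _ _ _ _ _ _.
rewrite mul1r (_ : x + y - (x' + y') = (x - x') + (y - y')); last by ring.
exact: ler_normD.
Qed.

Lemma LL_opp (f : M -> R) : LL f -> LL (fun p => - f p).
Proof.
move=> hf; apply: (@LL_comp2 (fun x y => - x) (fun _ => True) f f) => // B B0.
exists 1; split=> // x y x' y' _ _ _ _ _ _.
rewrite mul1r -opprD normrN; have := normr_ge0 (y - y'); lra.
Qed.

Lemma LL_sub (f g : M -> R) : LL f -> LL g -> LL (fun p => f p - g p).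
Proof. by move=> hf hg; apply: LL_add => //; apply: LL_opp. Qed.

Lemma LL_mul (f g : M -> R) : LL f -> LL g -> LL (fun p => f p * g p).
Proof.
apply: (@LL_comp2 (fun x y => x * y) (fun _ => True)) => // B B0.
exists B; split=> // x y x' y' _ _ hx hy hx' hy'.
rewrite (_ : x * y - x' * y' = x * (y - y') + y' * (x - x')); last by ring.
apply: le_trans (ler_normD _ _) _; rewrite !normrM.
have := ler_pM (normr_ge0 x) (normr_ge0 (y - y')) hx (lexx _).
have := ler_pM (normr_ge0 y') (normr_ge0 (x - x')) hy' (lexx _).
lra.
Qed.

Lemma LL_sum (I : Type) (s : seq I) (P : pred I) (F : I -> M -> R) :
  (forall k, LL (F k)) -> LL (fun p => \sum_(k <- s | P k) F k p).
Proof.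
move=> hF; elim: s => [|a s IH].
  by apply: (LL_ext _ (LL_const 0)) => p; rewrite big_nil.
case Pa: (P a).
  by apply: (LL_ext _ (LL_add (hF a) IH)) => p; rewrite big_cons Pa.
by apply: (LL_ext _ IH) => p; rewrite big_cons Pa.
Qed.

Lemma LL_inv (f : M -> R) : LL f -> (forall p, 0 < f p) -> LL (fun p => (f p)^-1).
Proof.
move=> hf hpos p0; have [r [r0 [L [L0 H]]]] := hf p0.
set c := f p0; have c0 : 0 < c := hpos p0.
set r' := Num.min r (c / (2 * (L + 1))).
have r'0 : 0 < r' by rewrite lt_min r0 divr_gt0 // mulr_gt0 // ltr_wpDl.
have hball : forall p, cnorm (p - p0) < r' -> c / 2 <= f p.
  move=> p; rewrite lt_min => /andP[h1 h2].
  have h0 : cnorm (p0 - p0) < r by rewrite cnorm_subrr.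
  have := H p p0 h1 h0; rewrite -/c => h3.
  have h4 : L * cnorm (p - p0) <= c / 2.
    have hL : 0 < 2 * (L + 1) by rewrite mulr_gt0 // ltr_wpDl.
    rewrite ltr_pdivlMr // in h2.
    have := cnorm_ge0 (p - p0); nra.
  have := ler_norm (c - f p); rewrite distrC; lra.
exists r'; split=> //; exists (L * (2 / c) ^+ 2); split.
  by rewrite mulr_ge0 // sqr_ge0.
move=> p p' hp hp'.
have hq := hball _ hp; have hq' := hball _ hp'.
have fp0 := hpos p; have fp'0 := hpos p'.
have hr : r' <= r by rewrite ge_min lexx.
have := H p p' (lt_le_trans hp hr) (lt_le_trans hp' hr) => hl.
have e : (f p)^-1 - (f p')^-1 = (f p' - f p) / (f p * f p').
  by field; rewrite !gt_eqF.
rewrite e normrM distrC.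
have hpp : 0 < f p * f p' by rewrite mulr_gt0.
have hi0 : 0 <= (f p * f p')^-1 by rewrite invr_ge0 ltW.
rewrite (ger0_norm hi0).
have hinv : (f p * f p')^-1 <= (2 / c) ^+ 2.
  rewrite -[X in X <= _]mul1r ler_pdivrMr //.
  have ht : 0 < 2 / c by rewrite divr_gt0.
  have htc : 2 / c * c = 2 by rewrite mulfVK // gt_eqF.
  have a1 : 1 <= 2 / c * f p by nra.
  have a2 : 1 <= 2 / c * f p' by nra.
  nra.
apply: le_trans (ler_pM (normr_ge0 _) hi0 hl hinv) _.
by rewrite mulrAC.
Qed.

End LLsec.
Section Scalar.
Variable R : realType.

Lemma expR_lip (B x y : R) : `|x| <= B -> `|y| <= B ->
  `|expR x - expR y| <= expR B * `|x - y|.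
Proof.
move=> hx hy.
have hxB : x <= B by apply: le_trans (ler_norm x) hx.
have hyB : y <= B by apply: le_trans (ler_norm y) hy.
have ex : expR x <= expR B by rewrite ler_expR.
have ey : expR y <= expR B by rewrite ler_expR.
have A1 : expR y * (1 + (x - y)) <= expR x.
  have := expR_ge1Dx (x - y); rewrite -(ler_pM2l (expR_gt0 y)) -expRD.
  by rewrite [y + _]addrC subrK.
have A2 : expR x * (1 + (y - x)) <= expR y.
  have := expR_ge1Dx (y - x); rewrite -(ler_pM2l (expR_gt0 x)) -expRD.
  by rewrite [x + _]addrC subrK.
have px := expR_gt0 x; have py := expR_gt0 y.
case: (lerP x y) => hxy.
  rewrite ler_norml; apply/andP; split; nra.
rewrite ler_norml; apply/andP; split; nra.
Qed.

Lemma max_lip (c x y : R) : `|Num.max x c - Num.max y c| <= `|x - y|.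
Proof.
have a1 := ler_norm (x - y); have a2 := ler_norm (y - x); rewrite distrC in a2.
case: (leP x c) => h1; case: (leP y c) => h2;
  rewrite ler_norml; apply/andP; split; lra.
Qed.

End Scalar.
Section HG.
Variable R : realType.

Definition hv (ra e x : R) : R := if x <= ra then (ra - x) / (x + e) else 0.

Lemma inv_facts (t : R) : 0 < t -> 0 < t^-1 /\ t^-1 * t = 1.
Proof. by move=> t0; split; [rewrite invr_gt0 | rewrite mulVf // gt_eqF]. Qed.

Lemma hv_lip (ra e x y : R) : 0 <= ra -> 0 < e -> 0 <= x -> 0 <= y ->
  `|hv ra e x - hv ra e y| <= (ra + e) * e^-1 ^+ 2 * `|x - y|.
Proof.
move=> ra0 e0; wlog hxy : x y / x <= y.
  move=> W hx hy; case: (leP x y) => h; first by apply: W.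
  by rewrite distrC (distrC x); apply: W => //; apply: ltW.
move=> hx hy.
have [ie0 iee] := inv_facts e0.
have xe0 : 0 < x + e by rewrite ltr_wpDl.
have ye0 : 0 < y + e by rewrite ltr_wpDl.
have [a0 ae] := inv_facts xe0; have [b0 be] := inv_facts ye0.
set a := (x + e)^-1 in a0 ae *; set b := (y + e)^-1 in b0 be *; set ie := e^-1 in ie0 iee *.
have aie : a <= ie by nra.
have bie : b <= ie by nra.
rewrite (ler0_norm (x := x - y)) ?subr_le0 // /hv.
case: (lerP x ra) => h1; case: (lerP y ra) => h2; rewrite -/a -/b.
- have e1 : (ra - x) * a - (ra - y) * b = (ra + e) * (a * b) * (y - x).
    have k1 : a * b * (y + e) = a by rewrite -mulrA be mulr1.
    have k2 : a * b * (x + e) = b by rewrite (mulrC a) -mulrA ae mulr1.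
    nra.
  have hab : a * b <= ie ^+ 2 by rewrite expr2; apply: ler_pM => //; apply: ltW.
  have hab0 : 0 <= a * b by rewrite mulr_ge0 ?ltW.
  have hr : 0 <= ra + e by lra.
  have hyx : 0 <= y - x by lra.
  rewrite e1 ger0_norm; last by apply: mulr_ge0 => //; apply: mulr_ge0.
  have : (ra + e) * (a * b) <= (ra + e) * ie ^+ 2 by rewrite ler_wpM2l.
  nra.
- rewrite subr0 ger0_norm; last by apply: mulr_ge0; lra.
  have : (ra + e) * ie >= 1 by nra.
  move=> h3.
  have : (ra - x) * a <= (y - x) * ie by nra.
  have h4 : 0 <= ie * (y - x) by apply: mulr_ge0; lra.
  have := ler_wpM2r h4 h3.
  rewrite mul1r.
  have -> : (ra + e) * ie ^+ 2 * - (x - y) = (ra + e) * ie * (ie * (y - x)) by ring.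
  lra.
- lra.
- rewrite subrr normr0; apply: mulr_ge0; [apply: mulr_ge0; [lra | apply: sqr_ge0] | lra].
Qed.

Definition Gf (x y : R) : R := x ^+ 2 / Num.max x y.

Lemma Gf_eq (x y : R) : 0 <= x -> Gf x y = if y <= x then x else x ^+ 2 / y.
Proof.
move=> hx; rewrite /Gf; case: (leP y x) => h //.
have [->|xn0] := eqVneq x 0; first by rewrite expr0n /= mul0r.
by rewrite expr2 mulfK.
Qed.

Lemma Gf_y_lip (x y y' : R) : 0 <= x -> `|Gf x y - Gf x y'| <= `|y - y'|.
Proof.
move=> hx; wlog hyy : y y' / y <= y'.
  move=> W; case: (leP y y') => h; first by apply: W.
  by rewrite distrC (distrC y); apply: W => //; apply: ltW.
rewrite (ler0_norm (x := y - y')) ?subr_le0 // !Gf_eq //.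
case: (lerP y x) => h1; case: (lerP y' x) => h2.
- by rewrite subrr normr0; lra.
- have y'0 : 0 < y' by lra.
  have [c0 ce] := inv_facts y'0; set c := y'^-1 in c0 ce *.
  have k : x * c <= 1 by nra.
  have : 0 <= x - x ^+ 2 * c <= y' - y.
    rewrite expr2; apply/andP; split; nra.
  move=> /andP[k1 k2]; rewrite ger0_norm //; lra.
- lra.
- have y0 : 0 < y by lra.
  have y'0 : 0 < y' by lra.
  have [c0 ce] := inv_facts y'0; set c := y'^-1 in c0 ce *.
  have [b0 be] := inv_facts y0; set b := y^-1 in b0 be *.
  have e1 : x ^+ 2 * b - x ^+ 2 * c = x ^+ 2 * b * c * (y' - y).
    have k1 : b * c * y' = b by rewrite -mulrA ce mulr1.
    have k2 : b * c * y = c by rewrite (mulrC b) -mulrA be mulr1.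
    have -> : x ^+ 2 * b * c * (y' - y) = x ^+ 2 * (b * c * y') - x ^+ 2 * (b * c * y)
      by ring.
    by rewrite k1 k2.
  have k3 : x ^+ 2 * b * c <= 1.
    have : x ^+ 2 <= y * y' by rewrite expr2; apply: ler_pM; lra.
    have bc0 : 0 < b * c by rewrite mulr_gt0.
    have : b * c * (y * y') = 1 by rewrite mulrACA be ce mulr1.
    nra.
  have hyy' : 0 <= y' - y by lra.
  have hp : 0 <= x ^+ 2 * b * c by apply: mulr_ge0; [apply: mulr_ge0; [apply: sqr_ge0|lra]|lra].
  rewrite e1 ger0_norm; last by apply: mulr_ge0.
  rewrite opprB.
  nra.
Qed.

Lemma Gf_x_lip (x x' y : R) : 0 <= x -> 0 <= x' -> `|Gf x y - Gf x' y| <= 2 * `|x - x'|.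
Proof.
wlog hxx : x x' / x <= x'.
  move=> W; case: (leP x x') => h; first by apply: W.
  by move=> a b; rewrite distrC (distrC x); apply: W => //; apply: ltW.
move=> hx hx'.
rewrite (ler0_norm (x := x - x')) ?subr_le0 // !Gf_eq //.
case: (lerP y x) => h1; case: (lerP y x') => h2.
- rewrite ler0_norm ?subr_le0 //; lra.
- lra.
- have y0 : 0 < y by lra.
  have [b0 be] := inv_facts y0; set b := y^-1 in b0 be *.
  have k : x * b <= 1 by nra.
  have : 0 <= x' - x ^+ 2 * b <= 2 * (x' - x).
    rewrite expr2; apply/andP; split; nra.
  move=> /andP[k1 k2]; rewrite distrC ger0_norm //; lra.
- have y0 : 0 < y by lra.
  have [b0 be] := inv_facts y0; set b := y^-1 in b0 be *.
  have e1 : x ^+ 2 * b - x' ^+ 2 * b = - ((x + x') * b * (x' - x)) by ring.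
  have hxx' : 0 <= x' - x by lra.
  have h3 : 0 <= (x + x') * b by apply: mulr_ge0; lra.
  rewrite e1 normrN ger0_norm; last by apply: mulr_ge0.
  have : (x + x') * b <= 2 by nra.
  rewrite opprB; nra.
Qed.

Lemma Gf_lip (x y x' y' : R) : 0 <= x -> 0 <= x' ->
  `|Gf x y - Gf x' y'| <= 2 * (`|x - x'| + `|y - y'|).
Proof.
move=> hx hx'.
have := Gf_x_lip y hx hx'; have := Gf_y_lip y y' hx'.
have := ler_normD (Gf x y - Gf x' y) (Gf x' y - Gf x' y').
rewrite addrA subrK.
have := normr_ge0 (y - y'); lra.
Qed.

End HG.
Section Vec.
Variables (R : realType) (n d : nat).
Local Notation M := 'M[R]_(n, d).

Definition LLv (u : M -> 'rV[R]_d) := forall j, LL (fun p => u p 0 j).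

Lemma LL_unif (I : eqType) (s : seq I) (F : I -> M -> R) :
  (forall k, LL (F k)) -> forall p0 : M, exists r : R, 0 < r /\ exists L : R,
  0 <= L /\ forall k p p', k \in s -> cnorm (p - p0) < r -> cnorm (p' - p0) < r ->
    `|F k p - F k p'| <= L * cnorm (p - p').
Proof.
move=> hF p0; elim: s => [|a s [r [r0 [L [L0 H]]]]].
  by exists 1; split=> //; exists 0; split=> // k p p'; rewrite in_nil.
have [ra [ra0 [La [La0 Ha]]]] := hF a p0.
exists (Num.min r ra); split; first by rewrite lt_min r0 ra0.
exists (L + La); split; first by rewrite addr_ge0.
move=> k p p'; rewrite inE !lt_min => /orP[/eqP->|ks] /andP[h1 h2] /andP[h3 h4].
  apply: le_trans (Ha _ _ h2 h4) _; rewrite ler_wpM2r ?cnorm_ge0 //; lra.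
apply: le_trans (H _ _ _ ks h1 h3) _; rewrite ler_wpM2r ?cnorm_ge0 //; lra.
Qed.

Lemma LLv_ll (f : M -> 'rV[R]_d) : LLv f -> locally_lipschitz f.
Proof.
move=> hf p0.
have [r [r0 [L [L0 H]]]] := LL_unif (index_enum 'I_d) hf p0.
exists r; split=> //; exists (d%:R * L) => p p' hp hp'.
apply: le_trans (vnorm_le_sum _) _.
apply: (@le_trans _ _ (\sum_(j < d) L * cnorm (p - p'))).
  apply: ler_sum => j _; rewrite !mxE; apply: H => //; exact: mem_index_enum.
by rewrite sumr_const cardT size_enum_ord -mulrA [X in _ <= X]mulr_natl.
Qed.

Lemma LLv_ext (u w : M -> 'rV[R]_d) : (forall p, u p = w p) -> LLv u -> LLv w.
Proof. by move=> e h j; apply: (LL_ext _ (h j)) => p; rewrite e. Qed.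

Lemma LLv_row i : LLv (fun p => pos p i).
Proof. by move=> j; apply: (LL_ext _ (LL_entry i j)) => p; rewrite mxE. Qed.

Lemma LLv_const (w : 'rV[R]_d) : LLv (fun _ => w).
Proof. by move=> j; apply: LL_const. Qed.

Lemma LLv_sub (u w : M -> 'rV[R]_d) : LLv u -> LLv w -> LLv (fun p => u p - w p).
Proof.
move=> hu hw j; apply: (LL_ext _ (LL_sub (hu j) (hw j))) => p; by rewrite !mxE.
Qed.

Lemma LLv_scale (a : M -> R) (u : M -> 'rV[R]_d) : LL a -> LLv u -> LLv (fun p => a p *: u p).
Proof.
move=> ha hu j; apply: (LL_ext _ (LL_mul ha (hu j))) => p; by rewrite !mxE.
Qed.

Lemma LLv_sum (I : Type) (s : seq I) (P : pred I) (U : I -> M -> 'rV[R]_d) :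
  (forall k, LLv (U k)) -> LLv (fun p => \sum_(k <- s | P k) U k p).
Proof.
move=> hU j; apply: (LL_ext _ (@LL_sum _ _ _ _ s P (fun k p => U k p 0 j) (fun k => hU k j))).
by move=> p; rewrite summxE.
Qed.

Lemma LL_vdot (u w : M -> 'rV[R]_d) : LLv u -> LLv w -> LL (fun p => vdot (u p) (w p)).
Proof.
move=> hu hw; rewrite /vdot.
exact: (@LL_sum _ _ _ _ _ _ (fun j p => u p 0 j * w p 0 j) (fun j => LL_mul (hu j) (hw j))).
Qed.

Lemma LL_vnorm_pos i k : LL (fun p : M => vnorm (pos p i - pos p k)).
Proof.
move=> p0; exists 1; split=> //; exists (d%:R * 2); split.
  by rewrite mulr_ge0 // ler0n.
move=> p p' _ _; apply: le_trans (vnorm_lip _ _) _.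
apply: le_trans (vnorm_le_sum _) _.
apply: (@le_trans _ _ (\sum_(j < d) 2 * cnorm (p - p'))).
  apply: ler_sum => j _; rewrite !mxE.
  have e : p i j - p k j - (p' i j - p' k j) = (p - p') i j - (p - p') k j.
    by rewrite !mxE; ring.
  rewrite e; apply: le_trans (ler_normB _ _) _.
  have := entry_le (p - p') i j; have := entry_le (p - p') k j; lra.
by rewrite sumr_const cardT size_enum_ord -mulrA [X in _ <= X]mulr_natl.
Qed.

Lemma LL_expR (f : M -> R) : LL f -> LL (fun p => expR (f p)).
Proof.
move=> hf; apply: (@LL_comp2 _ _ _ (fun x y => expR x) (fun _ => True) f f) => // B B0.
exists (expR B); split; first exact: ltW (expR_gt0 _).
move=> x y x' y' _ _ hx _ hx' _.
apply: le_trans (expR_lip hx hx') _.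
apply: ler_wpM2l; first exact: ltW (expR_gt0 _).
have := normr_ge0 (y - y'); lra.
Qed.

Lemma LL_maxc (f : M -> R) (c : R) : LL f -> LL (fun p => Num.max (f p) c).
Proof.
move=> hf; apply: (@LL_comp2 _ _ _ (fun x y => Num.max x c) (fun _ => True) f f) => // B B0.
exists 1; split=> // x y x' y' _ _ _ _ _ _.
apply: le_trans (max_lip _ _ _) _; have := normr_ge0 (y - y'); lra.
Qed.

Lemma LL_hv (f : M -> R) (ra e : R) : 0 <= ra -> 0 < e -> LL f -> (forall p, 0 <= f p) ->
  LL (fun p => hv ra e (f p)).
Proof.
move=> ra0 e0 hf hpos.
apply: (@LL_comp2 _ _ _ (fun x y => hv ra e x) (fun x => 0 <= x) f f) => // B B0.
exists ((ra + e) * e^-1 ^+ 2); split.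
  by apply: mulr_ge0; [lra | apply: sqr_ge0].
move=> x y x' y' hx hx' _ _ _ _.
apply: le_trans (hv_lip ra0 e0 hx hx') _.
apply: ler_wpM2l; first by apply: mulr_ge0; [lra | apply: sqr_ge0].
have := normr_ge0 (y - y'); lra.
Qed.

Lemma LL_Gf (f g : M -> R) : LL f -> LL g -> (forall p, 0 <= f p) ->
  LL (fun p => Gf (f p) (g p)).
Proof.
move=> hf hg hpos.
apply: (@LL_comp2 _ _ _ (@Gf R) (fun x => 0 <= x) f g) => // B B0.
exists 2; split=> // x y x' y' hx hx' _ _ _ _.
exact: Gf_lip.
Qed.

End Vec.
Lemma kappa2_eq (R : realType) (d : nat) (eps : R) (v vt : 'rV[R]_d) :
  0 < eps -> eps < 1 ->
  kappa2 eps v vt = Gf ((1 - eps) * vdot v v) (- vdot v vt)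
                    / ((1 - eps) * Num.max (vdot v v) eps).
Proof.
move=> e0 e1; rewrite /kappa2 vnorm_sq.
have hcs := cauchy_schwarz v vt.
have hB := vdot_ge0 vt.
have a0 := vdot_ge0 v.
set a := vdot v v in hcs a0 *; set s := vdot v vt in hcs *.
set c := 1 - eps.
have c0 : 0 < c by rewrite /c; lra.
have ca0 : 0 <= c * a by apply: mulr_ge0; lra.
rewrite Gf_eq //.
have [a_eq0|apos] : a = 0 \/ 0 < a.
  by case: (leP a 0) => h; [left; lra | right].
  have s0 : s = 0.
    move: hcs; rewrite a_eq0 mul0r => h.
    by apply/eqP; rewrite -sqrf_eq0 eq_le h sqr_ge0.
  rewrite a_eq0 s0 lexx oppr0 mulr0 lexx mul0r mul0r.
  by case: (leP 0 1) => h; lra.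
have mpos : 0 < Num.max a eps by rewrite lt_max apos.
have hmin : Num.min (a / eps) 1 = a / Num.max a eps.
  case: (leP a eps) => h.
    case: (leP (a / eps) 1) => h2 //.
    by rewrite ltr_pdivlMr // mul1r in h2; lra.
  case: (leP (a / eps) 1) => h2.
    by rewrite ler_pdivrMr // mul1r in h2; lra.
  by rewrite divff // gt_eqF.
rewrite hmin.
have mn0 : Num.max a eps != 0 by rewrite gt_eqF.
have cn0 : c != 0 by rewrite gt_eqF.
case: (leP 0 s) => hs.
  have -> : - s <= c * a by lra.
  by field; rewrite ?mn0 ?cn0 ?sn0.
have ns0 : 0 < - s by lra.
have sn0 : s != 0 by rewrite lt_eqF.
have e : - c * a / s = (c * a) / (- s) by rewrite invrN mulrN !mulNr.
rewrite e.
case: (leP (- s) (c * a)) => h.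
  have -> : Num.min (c * a / - s) 1 = 1.
    case: (leP (c * a / - s) 1) => h2 //.
    apply/eqP; rewrite eq_le h2 /= ler_pdivlMr // mul1r //.
  by rewrite mulr1; field; rewrite ?mn0 ?cn0 ?sn0.
have -> : Num.min (c * a / - s) 1 = c * a / - s.
  case: (leP (c * a / - s) 1) => h2 //.
  by rewrite ltr_pdivlMr // mul1r in h2; lra.
by field; rewrite ?mn0 ?cn0 ?sn0.
Qed.

Lemma v_rep_eq (R : realType) (n d : nat) (sigma2 eps ravoid : R) (p : 'M[R]_(n, d)) i :
  v_rep sigma2 eps ravoid p i = sigma2 *: \sum_(j < n | j != i)
    hv ravoid eps (vnorm (pos p i - pos p j)) *: (pos p i - pos p j).
Proof.
rewrite /v_rep big_mkcondr; congr (_ *: _); apply: eq_bigr => j _.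
by rewrite /hv; case: ifP => _ //; rewrite scale0r.
Qed.

Unset Implicit Arguments.

Theorem lemma6 (R : realType) (n d m : nat) (q : 'I_m -> 'rV[R]_d)
  (beta sigma1 sigma2 eps ravoid : R) :
  (2 <= n)%N -> (0 < m)%N ->
  0 < beta -> 0 < sigma1 -> 0 < sigma2 -> 0 < eps -> eps < 1 -> 0 < ravoid ->
  forall i : 'I_n,
    locally_lipschitz (fun p : 'M[R]_(n, d) =>
      v_cv beta sigma1 sigma2 eps ravoid q p i).
Proof.
move=> hn hm hb hs1 hs2 he he1 hr i.
apply: LLv_ll.
have LLe : forall k l, LL (fun p : 'M[R]_(n, d) => expR (- beta * vnorm (q k - pos p l) ^+ 2)).
  move=> k l.
  apply: (@LL_ext _ _ _ (fun p => expR (- beta * vdot (q k - pos p l) (q k - pos p l)))).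
    by move=> p; rewrite vnorm_sq.
  apply: LL_expR; apply: LL_mul; first exact: LL_const.
  by apply: LL_vdot; apply: LLv_sub; first [exact: LLv_const | exact: LLv_row].
have Lmass : forall k, LL (fun p : 'M[R]_(n, d) => mass beta q p k).
  move=> k; rewrite /mass; apply: LL_mul; first exact: LL_const.
  by apply: LL_sum => l; apply: LLe.
have Pmass : forall (p : 'M[R]_(n, d)) k, 0 < mass beta q p k.
  move=> p k; rewrite /mass; apply: mulr_gt0.
    by rewrite invr_gt0 ltr0n; apply: leq_trans hn.
  rewrite (bigD1 i) //=; apply: ltr_wpDr; last exact: expR_gt0.
  by apply: sumr_ge0 => l _; apply: ltW; apply: expR_gt0.
pose W k (p : 'M[R]_(n, d)) :=
  (mass beta q p k)^-1 * expR (- beta * vnorm (q k - pos p i) ^+ 2).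
have LW : forall k, LL (W k).
  by move=> k; apply: LL_mul; [apply: LL_inv; [apply: Lmass | move=> p; apply: Pmass] | apply: LLe].
have PW : forall k p, 0 < W k p.
  by move=> k p; apply: mulr_gt0; [rewrite invr_gt0 | apply: expR_gt0].
have Lms : LLv (fun p : 'M[R]_(n, d) => v_ms beta sigma1 q p i).
  rewrite /v_ms; apply: LLv_scale.
    apply: LL_inv; first by apply: LL_sum => k; apply: LW.
    move=> p; rewrite (bigD1 (Ordinal hm)) //=; apply: ltr_pwDl; first exact: PW.
    by apply: sumr_ge0 => k _; apply: ltW; apply: PW.
  apply: LLv_scale; first exact: LL_const.
  apply: LLv_sum => k; apply: LLv_scale; first exact: LW.
  by apply: LLv_sub; [exact: LLv_const | exact: LLv_row].
have Lrep : LLv (fun p : 'M[R]_(n, d) => v_rep sigma2 eps ravoid p i).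
  apply: (@LLv_ext _ _ _ (fun p => sigma2 *: \sum_(j < n | j != i)
    hv ravoid eps (vnorm (pos p i - pos p j)) *: (pos p i - pos p j))).
    by move=> p; rewrite v_rep_eq.
  apply: LLv_scale; first exact: LL_const.
  apply: LLv_sum => j; apply: LLv_scale.
    apply: LL_hv; [exact: ltW | exact: he | exact: LL_vnorm_pos | move=> p; exact: sqrtr_ge0].
  by apply: LLv_sub; exact: LLv_row.
pose vms := fun p : 'M[R]_(n, d) => v_ms beta sigma1 q p i.
pose vrep := fun p : 'M[R]_(n, d) => v_rep sigma2 eps ravoid p i.
have key : LLv (fun p => (Gf ((1 - eps) * vdot (vms p) (vms p)) (- vdot (vms p) (vrep p))
   / ((1 - eps) * Num.max (vdot (vms p) (vms p)) eps)) *: vrep p).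
  apply: LLv_scale => //; apply: LL_mul.
    apply: LL_Gf.
    - by apply: LL_mul; [exact: LL_const | exact: LL_vdot].
    - by apply: LL_opp; exact: LL_vdot.
    - by move=> p; apply: mulr_ge0; [lra | exact: vdot_ge0].
  apply: LL_inv.
    by apply: LL_mul; [exact: LL_const | apply: LL_maxc; exact: LL_vdot].
  move=> p; apply: mulr_gt0; first lra.
  by rewrite lt_max he orbT.
apply: LLv_ext key => p.
by rewrite /v_cv kappa2_eq.
Qed.
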